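(* Fix a round $r$. Let $\mathcal V^r$ be the multiset of all disseminated perturbed adoption vectors in round $r$, $V^r=|\mathcal V^r|$, and for each agent $i$ let $\mathcal V^r_i\subseteq\mathcal V^r$ be the sub-multiset sampled by $i$, $V^r_i=|\mathcal V^r_i|$. Let $\Lambda^r_{i,j}=\frac1{V^r_i}\sum_{\widetilde{\mathbf X}\in\mathcal V^r_i}[\widetilde{\mathbf X}]_j$ and $\Lambda^r_j=\frac1{V^r}\sum_{\widetilde{\mathbf X}\in\mathcal V^r}[\widetilde{\mathbf X}]_j$. Assume the $\frac1{N^3}$-nearly uniform distribution holds in round $r$, i.e., each token independently ends at each given agent with probability in $[\frac1N-\frac1{N^3},\frac1N+\frac1{N^3}]$ (which happens with probability at least $1-N^{-h/3}$). Then for all agents $i$ and options $j$, $$\xi_0\le\frac{\mathbb E\left[\Lambda^r_{i,j}\,\middle|\,V^r_i,\widetilde{\mathcal X}^r\right]}{\Lambda^r_j}\le\xi_1,$$ where $$\xi_0=\left(1-\frac{2}{N^2+1}\right)^{V^r_i}\left(1-\frac{2}{N^3-N^2+1}\right)^{V^r-V^r_i},\qquad \xi_1=\left(1+\frac{2}{N^2-1}\right)^{V^r_i}\left(1+\frac{2}{N^3-N^2-1}\right)^{V^r-V^r_i}.$$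
   Context: Agents $\mathcal N=\{1,\dots,N\}$ form a connected non-bipartite graph. In round $r$, each agent that adopted an option in round $r-1$ has a perturbed adoption vector $\widetilde{\mathbf X}^r_i\in\{0,1\}^M$ (obtained by independently flipping each coordinate of its adoption vector with probability $\frac1{e^{\varepsilon/2}+1}$); $\widetilde{\mathcal X}^r=\{\widetilde{\mathbf X}^r_i\}_i$. Each such agent launches $hg(N)$ independent Metropolis–Hastings random walk tokens carrying its vector (so $\mathcal V^r$ consists of $hg(N)$ copies of each perturbed vector), where $h=16\sigma/(1-\beta)$, $\sigma\ge11$, $\beta\in(1/2,1)$, and $g:\mathbb N^+\to\mathbb R$ satisfies $\ell\ln N<g(N)<\ell N$ for every $\ell>0$ and all sufficiently large $N$. A token is sampled by the agent at which its walk ends. $[\widetilde{\mathbf X}]_j$ denotes the $j$-th coordinate. *)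

(* Defs.v *)
From mathcomp Require Import all_boot all_order all_algebra.
Set Implicit Arguments. Unset Strict Implicit. Unset Printing Implicit Defensive.
Import Order.TTheory GRing.Theory Num.Theory.
Local Open Scope ring_scope.

(* Tokens are indexed by 'I_V (V = V^r = |calV^r|); token t
   carries the perturbed vector x t : 'I_M -> bool.  The perturbed vectors
   (hence x) are fixed: everything is conditioned on tilde-calX^r.
   Agents are 'I_N.  An outcome is an endpoint assignment
   a : {ffun 'I_V -> 'I_N} (token t ends, and is sampled, at agent a t).
   Tokens end independently, token t at agent k with probability p t k. *)

Section Defs.
Variables (R : realFieldType) (N M V : nat).
Variables (x : 'I_V -> 'I_M -> bool) (p : 'I_V -> 'I_N -> R).

Definition prob (a : {ffun 'I_V -> 'I_N}) : R := \prod_(t < V) p t (a t).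

Definition sampled (i : 'I_N) (a : {ffun 'I_V -> 'I_N}) : {set 'I_V} :=
  [set t | a t == i].

Definition Vi (i : 'I_N) (a : {ffun 'I_V -> 'I_N}) : nat := #|sampled i a|.

Definition Lam_ij (i : 'I_N) (j : 'I_M) (a : {ffun 'I_V -> 'I_N}) : R :=
  (\sum_(t in sampled i a) (x t j)%:R) / (Vi i a)%:R.

Definition Lam_j (j : 'I_M) : R := (\sum_(t < V) (x t j)%:R) / V%:R.

Definition prob_Vi (i : 'I_N) (n : nat) : R :=
  \sum_(a : {ffun 'I_V -> 'I_N} | Vi i a == n) prob a.

Definition cond_exp_Lam (i : 'I_N) (j : 'I_M) (n : nat) : R :=
  (\sum_(a : {ffun 'I_V -> 'I_N} | Vi i a == n) prob a * Lam_ij i j a)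
    / prob_Vi i n.

End Defs.

Definition nearly_uniform (R : realFieldType) (N V : nat)
  (p : 'I_V -> 'I_N -> R) : Prop :=
  (forall t, \sum_(k < N) p t k = 1) /\
  (forall t k, (N%:R)^-1 - (N%:R ^+ 3)^-1 <= p t k <= (N%:R)^-1 + (N%:R ^+ 3)^-1).

Definition xi0 (R : realFieldType) (N V n : nat) : R :=
  (1 - 2 / (N%:R ^+ 2 + 1)) ^+ n *
  (1 - 2 / (N%:R ^+ 3 - N%:R ^+ 2 + 1)) ^+ (V - n).

Definition xi1 (R : realFieldType) (N V n : nat) : R :=
  (1 + 2 / (N%:R ^+ 2 - 1)) ^+ n *
  (1 + 2 / (N%:R ^+ 3 - N%:R ^+ 2 - 1)) ^+ (V - n).

(* Main.v *)
Require Import Defs.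
From mathcomp Require Import all_boot all_order all_algebra all_fingroup.
From mathcomp Require Import lra ring.
Import Order.TTheory GRing.Theory Num.Theory.
Local Open Scope ring_scope.
Set Implicit Arguments. Unset Strict Implicit.

Section Aux.
Variables (R : realFieldType) (N V : nat) (p : 'I_V -> 'I_N -> R) (i : 'I_N).

Definition w (S : {set 'I_V}) : R :=
  \prod_(t < V) (if t \in S then p t i else 1 - p t i).

Lemma sum_fiber (S : {set 'I_V}) : (forall t, \sum_(k < N) p t k = 1) ->
  \sum_(a | sampled i a == S) prob p a = w S.
Proof.
move=> hp.
pose f t k := if (k == i) == (t \in S) then p t k else 0.
have E1 : w S = \prod_(t < V) \sum_(k < N) f t k.
  apply: eq_bigr => t _; rewrite /f; case: (t \in S).
    by rewrite -big_mkcond /= (big_pred1 i) // => k; rewrite /= eqb_id.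
  rewrite -big_mkcond /= -(hp t) (bigD1 i) //= addrAC subrr add0r.
  by apply: eq_bigl => k; rewrite eqbF_neg.
rewrite E1 bigA_distr_bigA /= big_mkcond /=; apply: eq_bigr => a _.
case: eqP => [hS|hne].
  rewrite /prob; apply: eq_bigr => t _; rewrite /f -hS /sampled inE eqxx //.
have : ~~ [forall t, (a t == i) == (t \in S)].
  apply/negP => /forallP H; apply: hne; apply/setP => u; rewrite /sampled inE.
  exact: (eqP (H u)).
rewrite negb_forall => /existsP [t /negbTE ht].
by rewrite (bigD1 t) //= /f ht mul0r.
Qed.

Lemma regroup (n : nat) (g : {set 'I_V} -> R) : (forall t, \sum_(k < N) p t k = 1) ->
  \sum_(a | Vi i a == n) prob p a * g (sampled i a)
  = \sum_(S : {set 'I_V} | #|S| == n) w S * g S.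
Proof.
move=> hp.
rewrite (partition_big (sampled i) (fun S : {set 'I_V} => #|S| == n)) //=.
apply: eq_bigr => S /eqP hS.
rewrite -(sum_fiber S hp) mulr_suml.
rewrite [RHS](eq_bigl (fun a => (Vi i a == n) && (sampled i a == S))).
  by apply: eq_bigr => a /andP[_ /eqP ->].
move=> a; rewrite /Vi; case: eqP => [->|]; by rewrite ?hS ?eqxx ?andbF.
Qed.

End Aux.
Section Count.
Variables (V n : nat).
Definition Dn := [set S : {set 'I_V} | #|S| == n].
Definition Ct (t : 'I_V) := [set S : {set 'I_V} | (#|S| == n) && (t \in S)].

Lemma Ct_le t t' : (#|Ct t| <= #|Ct t'|)%N.
Proof.
rewrite -(card_imset _ (imset_inj (@perm_inj _ (tperm t t')))).
apply: subset_leq_card; apply/subsetP => S' /imsetP [S HS ->].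
move: HS; rewrite !inE => /andP [hc ht].
rewrite card_imset ?hc /=; last exact: perm_inj.
by rewrite -{1}(tpermL t t') mem_imset //; exact: perm_inj.
Qed.

Lemma Ct_eq t t' : #|Ct t| = #|Ct t'|.
Proof. by apply/eqP; rewrite eqn_leq !Ct_le. Qed.

Lemma Ct_sum : (\sum_(t < V) #|Ct t| = n * #|Dn|)%N.
Proof.
transitivity (\sum_(t < V) \sum_(S in Dn) nat_of_bool (t \in S))%N.
  apply: eq_bigr => t _; rewrite -sum1_card big_mkcond [RHS]big_mkcond /=.
  by apply: eq_bigr => S _; rewrite !inE; case: (#|S| == n); case: (t \in S).
rewrite exchange_big /= mulnC -sum_nat_const.
apply: eq_bigr => S; rewrite inE => /eqP <-.
by rewrite -sum1_card [RHS]big_mkcond.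
Qed.

Lemma Ct_card t : (V * #|Ct t| = n * #|Dn|)%N.
Proof.
rewrite -Ct_sum (eq_bigr (fun _ => #|Ct t|)) ?sum_nat_const ?card_ord //.
by move=> u _; apply: Ct_eq.
Qed.
End Count.
Lemma facts (R : realFieldType) (y : R) : 3 <= y ->
  let Lo := y^-1 - (y ^+ 3)^-1 in let Up := y^-1 + (y ^+ 3)^-1 in
  (0 < Lo /\ 0 < 1 - Up) /\ [/\ (1 + 2 / (y ^+ 2 - 1)) * Lo = Up,
      (1 + 2 / (y ^+ 3 - y ^+ 2 - 1)) * (1 - Up) = 1 - Lo,
      (1 - 2 / (y ^+ 2 + 1)) * Up = Lo &
      (1 - 2 / (y ^+ 3 - y ^+ 2 + 1)) * (1 - Lo) = 1 - Up].
Proof.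
move=> hy Lo Up.
have y0 : y != 0 by apply/negP => /eqP y0; rewrite y0 in hy; lra.
have h2 : 0 < y ^+ 2 - 1 by rewrite expr2; nra.
have h3 : 0 < y ^+ 3 - y ^+ 2 - 1.
  have : 0 < y ^+ 2 * (y - 1) - 1 by rewrite expr2; nra.
  by rewrite mulrBr mulr1 -exprSr.
have h2' : 0 < y ^+ 2 + 1 by rewrite expr2; nra.
have h3' : 0 < y ^+ 3 - y ^+ 2 + 1 by lra.
have y3 : 0 < y ^+ 3 by apply: exprn_gt0; lra.
have eLo : Lo = (y ^+ 2 - 1) / y ^+ 3 by rewrite /Lo; field.
have eUp : 1 - Up = (y ^+ 3 - y ^+ 2 - 1) / y ^+ 3 by rewrite /Up; field.
split; first by split; [rewrite eLo divr_gt0|rewrite eUp divr_gt0].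
split; rewrite /Lo /Up; field;
  by rewrite ?y0 ?(gt_eqF h2) ?(gt_eqF h3) ?(gt_eqF h2') ?(gt_eqF h3').
Qed.
Lemma prod_if (R : realFieldType) (V : nat) (S : {set 'I_V}) (a b : R) :
  \prod_(t < V) (if t \in S then a else b) = a ^+ #|S| * b ^+ (V - #|S|).
Proof.
rewrite (bigID (fun t => t \in S)) /=.
rewrite (eq_bigr (fun _ => a)); last by move=> t ->.
rewrite [X in _ * X](eq_bigr (fun _ => b)); last by move=> t ht; rewrite (negbTE ht).
rewrite prodr_const (eq_bigl (mem (~: S))); last by move=> t; rewrite !inE.
have hc := cardsC S; rewrite card_ord in hc.
have -> : (V - #|S| = #|~: S|)%N by rewrite -{1}hc addKn.
by rewrite prodr_const.
Qed.

Lemma w_bounds (R : realFieldType) (N V : nat) (p : 'I_V -> 'I_N -> R) (i : 'I_N)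
  (l u : R) (S : {set 'I_V}) :
  (forall t, l <= p t i <= u) -> 0 <= l -> u <= 1 ->
  l ^+ #|S| * (1 - u) ^+ (V - #|S|) <= w p i S <= u ^+ #|S| * (1 - l) ^+ (V - #|S|).
Proof.
move=> hb hl hu; rewrite -!prod_if /w; apply/andP; split; apply: ler_prod => t _;
  have /andP [h1 h2] := hb t; case: (t \in S); apply/andP; split; lra.
Qed.

Unset Implicit Arguments. Set Strict Implicit.

Theorem lemma7 (R : realFieldType) (N M V : nat)
  (x : 'I_V -> 'I_M -> bool) (p : 'I_V -> 'I_N -> R) :
  (2 < N)%N ->
  nearly_uniform p ->
  forall (i : 'I_N) (j : 'I_M) (n : nat),
    (0 < n)%N -> 0 < prob_Vi p i n -> 0 < Lam_j R x j ->
    xi0 R N V n <= cond_exp_Lam x p i j n / Lam_j R x j <= xi1 R N V n.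
Proof.
move=> hN [hp hb] i j n hn hD hL.
have hy : (3 : R) <= N%:R by rewrite ler_nat.
have [[hLo hUp] [e1 e2 e3 e4]] := facts hy.
set Lo := (N%:R^-1 - (N%:R ^+ 3)^-1 : R) in hLo e1 e2 e3 e4.
set Up := (N%:R^-1 + (N%:R ^+ 3)^-1 : R) in hUp e1 e2 e3 e4.
set lo := Lo ^+ n * (1 - Up) ^+ (V - n).
set hi := Up ^+ n * (1 - Lo) ^+ (V - n).
have hw : forall S : {set 'I_V}, #|S| = n -> lo <= w p i S <= hi.
  move=> S hS; rewrite /lo /hi -hS; apply: w_bounds.
  - by move=> t; exact: hb.
  - exact: ltW.
  - lra.
have xi1lo : xi1 R N V n * lo = hi by rewrite /xi1 /lo mulrACA -!exprMn e1 e2.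
have xi0hi : xi0 R N V n * hi = lo by rewrite /xi0 /hi mulrACA -!exprMn e3 e4.
have lo0 : 0 < lo by rewrite /lo mulr_gt0 // exprn_gt0.
have h3i : 0 < (N%:R ^+ 3 : R)^-1 by rewrite invr_gt0 exprn_gt0 //; lra.
have hUp0 : 0 < Up by rewrite /Up; move: hLo; rewrite /Lo; lra.
have hLo1 : 0 < 1 - Lo by move: hUp hLo; rewrite /Lo /Up; lra.
have hi0 : 0 < hi by rewrite /hi mulr_gt0 // exprn_gt0.
have eD : prob_Vi p i n = \sum_(S in Dn V n) w p i S.
  transitivity (\sum_(S : {set 'I_V} | #|S| == n) w p i S * (fun _ => 1) S).
    rewrite /prob_Vi; etransitivity; last exact: (regroup i n (fun _ => 1) hp).
    by apply: eq_bigr => a _ /=; rewrite mulr1.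
  by apply: eq_big => [S|S _]; rewrite ?inE ?mulr1.
pose A t := \sum_(S in Ct n t) w p i S.
have eN : \sum_(a | Vi i a == n) prob p a * Lam_ij R x i j a
    = n%:R^-1 * \sum_(t < V) (x t j)%:R * A t.
  etransitivity; first exact: (regroup i n
     (fun S => (\sum_(t in S) (x t j)%:R) / #|S|%:R) hp).
  transitivity (\sum_(S : {set 'I_V} | #|S| == n) n%:R^-1 *
      \sum_(t < V) (x t j)%:R * (if t \in S then w p i S else 0)).
    apply: eq_bigr => S /eqP hS /=; rewrite hS big_mkcond /=.
    rewrite [_ / _]mulrC mulrCA; congr (_ * _); rewrite mulr_sumr.
    by apply: eq_bigr => t _; case: (t \in S); rewrite ?mulr0 ?mul0r // mulrC.
  rewrite -mulr_sumr exchange_big /=; congr (_ * _); apply: eq_bigr => t _.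
  rewrite -mulr_sumr /A; congr (_ * _).
  rewrite big_mkcond [RHS]big_mkcond /=; apply: eq_bigr => S _.
  by rewrite !inE; case: (#|S| == n).
have hV0 : (0 < V)%N.
  case: (posnP V) => // V0; move: hL; rewrite /Lam_j.
  have -> : (V%:R : R) = 0 by rewrite V0.
  by rewrite invr0 mulr0 ltxx.
have hV : (0 : R) < V%:R by rewrite ltr0n.
pose t0 : 'I_V := Ordinal hV0.
set X := \sum_(t < V) (x t j)%:R : R.
have hX : 0 < X.
  have : 0 < Lam_j R x j * V%:R by rewrite mulr_gt0.
  by rewrite /Lam_j divfK // gt_eqF.
set c := #|Ct n t0|.
set d := #|Dn V n|.
have hcd : (V%:R * c%:R = n%:R * d%:R :> R) by rewrite -!natrM Ct_card.
have hA : forall t, lo * c%:R <= A t <= hi * c%:R.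
  move=> t; rewrite /c (Ct_eq n t0 t) !mulr_natr -!sumr_const /A.
  apply/andP; split; apply: ler_sum => S; rewrite inE => /andP[/eqP hS _];
    by have /andP[] := hw S hS.
have hDb : lo * d%:R <= prob_Vi p i n <= hi * d%:R.
  rewrite eD /d !mulr_natr -!sumr_const.
  apply/andP; split; apply: ler_sum => S; rewrite inE => /eqP hS;
    by have /andP[] := hw S hS.
set T := \sum_(t < V) (x t j)%:R * A t.
have hT : lo * c%:R * X <= T <= hi * c%:R * X.
  rewrite /X !mulr_sumr; apply/andP; split; apply: ler_sum => t _;
    rewrite ![_ * (x t j)%:R]mulrC; apply: ler_wpM2l => //; by have /andP[] := hA t.
have hn' : (0 : R) < n%:R by rewrite ltr0n.
have hxi1 : 0 <= xi1 R N V n.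
  have : 0 < xi1 R N V n * lo by rewrite xi1lo.
  by rewrite pmulr_lgt0 // => /ltW.
have hxi0 : 0 <= xi0 R N V n.
  have : 0 < xi0 R N V n * hi by rewrite xi0hi.
  by rewrite pmulr_lgt0 // => /ltW.
rewrite /cond_exp_Lam eN -/T.
set D := prob_Vi p i n in hD hDb *.
have -> : Lam_j R x j = X / V%:R by [].
have er : (n%:R^-1 * T / D) / (X / V%:R) = (V%:R * T) / (n%:R * D * X).
  by field; rewrite ?gt_eqF.
have hnDX : 0 < n%:R * D * X by rewrite !mulr_gt0.
rewrite er ler_pdivlMr // ler_pdivrMr //.
case/andP: hT => hT1 hT2; case/andP: hDb => hD1 hD2.
apply/andP; split.
- apply: (le_trans (y := V%:R * (lo * c%:R * X))); last by apply: ler_wpM2l => //; exact: ltW.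
  have -> : V%:R * (lo * c%:R * X) = xi0 R N V n * (n%:R * (hi * d%:R) * X).
    rewrite -xi0hi; transitivity (xi0 R N V n * hi * X * (V%:R * c%:R)); first ring.
    by rewrite hcd; ring.
  apply: ler_wpM2l => //; apply: ler_wpM2r; first exact: ltW.
  by apply: ler_wpM2l => //; exact: ltW.
- apply: (le_trans (y := V%:R * (hi * c%:R * X))); first by apply: ler_wpM2l => //; exact: ltW.
  have -> : V%:R * (hi * c%:R * X) = xi1 R N V n * (n%:R * (lo * d%:R) * X).
    rewrite -xi1lo; transitivity (xi1 R N V n * lo * X * (V%:R * c%:R)); first ring.
    by rewrite hcd; ring.
  apply: ler_wpM2l => //; apply: ler_wpM2r; first exact: ltW.
  by apply: ler_wpM2l => //; exact: ltW.
Qed.
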